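(* Let ${\cal Q}$ be a collection of partial partitions of a set $X$. Then there is a one-to-one correspondence between the minimal restricted chordal completions of ${\rm int}({\cal Q})$ and the minimal chordal sandwiches of $({\rm int^*}({\cal Q}),{\rm forb}({\cal Q}))$.
   Context: A partial partition of $X$ is a partition $A_1|\ldots|A_t$ ($t\geq 2$) of a non-empty subset of $X$; the $A_i$ are its cells. The partial partition intersection graph ${\rm int}({\cal Q})$ has vertex set $\{(A,\pi): A \text{ is a cell of } \pi\in{\cal Q}\}$, with $(A,\pi)$ and $(A',\pi')$ adjacent iff $A\cap A'\neq\emptyset$. A graph is chordal if it has no induced cycle of length at least four; a chordal completion of $G=(V,E)$ is a chordal graph $(V,E')$ with $E\subseteq E'$. A restricted chordal completion of ${\rm int}({\cal Q})$ is a chordal completion $G'$ of ${\rm int}({\cal Q})$ such that whenever $A_1,A_2$ are distinct cells of the same $\pi\in{\cal Q}$, $(A_1,\pi)$ and $(A_2,\pi)$ are not adjacent in $G'$; it is minimal if no proper subgraph of $G'$ is a restricted chordal completion of ${\rm int}({\cal Q})$. The cell intersection graph ${\rm int^*}({\cal Q})$ has vertex set $\{A: A \text{ is a cell of some } \pi\in{\cal Q}\}$, with $A,A'$ adjacent iff $A\cap A'\neq\emptyset$. The graph ${\rm forb}({\cal Q})$ has the same vertex set, with $A,A'$ adjacent iff $A,A'$ are (distinct) cells of some common $\pi\in{\cal Q}$. For graphs $G_1=(V,E_1)$, $G_2=(V,E_2)$ with $E_1\cap E_2=\emptyset$, a chordal sandwich of $(G_1,G_2)$ is a chordal graph $(V,E')$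 with $E_1\subseteq E'$ and $E'\cap E_2=\emptyset$; it is minimal if no proper subgraph of it is a chordal sandwich of $(G_1,G_2)$. *)

(* Defs.v *)
From mathcomp Require Import all_boot.
Set Implicit Arguments. Unset Strict Implicit. Unset Printing Implicit Defensive.

Section Graphs.
Variable T : finType.

(* A (simple, undirected) graph with vertex set V : {set T} is represented by
   its edge set E : {set {set T}}, each edge being a 2-element subset of V. *)
Definition is_graph (V : {set T}) (E : {set {set T}}) : Prop :=
  forall e, e \in E -> #|e| = 2 /\ e \subset V.

Definition induced_cycle (E : {set {set T}}) (s : seq T) : Prop :=
  uniq s /\ 4 <= size s /\
  forall (x0 : T) (i j : nat), i < j -> j < size s ->
    ([set nth x0 s i; nth x0 s j] \in E <->
     (j = i.+1 \/ (i = 0 /\ j = (size s).-1))).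

Definition chordal (V : {set T}) (E : {set {set T}}) : Prop :=
  is_graph V E /\ ~ (exists s, induced_cycle E s).

Definition chordal_completion (V : {set T}) (E E' : {set {set T}}) : Prop :=
  chordal V E' /\ E \subset E'.

Definition chordal_sandwich (V : {set T}) (E1 E2 E' : {set {set T}}) : Prop :=
  chordal V E' /\ E1 \subset E' /\ E' :&: E2 = set0.

Definition minimal_chordal_sandwich (V : {set T}) (E1 E2 E' : {set {set T}})
  : Prop :=
  chordal_sandwich V E1 E2 E' /\
  forall F : {set {set T}}, F \proper E' -> ~ chordal_sandwich V E1 E2 F.

End Graphs.

Section PartialPartitions.
Variable X : finType.

(* A partial partition of X: a partition (in the mathcomp sense: nonempty,
   pairwise disjoint cells) of some subset of X, with at least two cells. *)
Definition partial_partition (P : {set {set X}}) : bool :=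
  partition P (cover P) && (1 < #|P|).

Variable Q : {set {set {set X}}}.

Definition int_vertices : {set {set X} * {set {set X}}} :=
  [set p | (p.2 \in Q) && (p.1 \in p.2)].

Definition int_edges : {set {set ({set X} * {set {set X}})}} :=
  [set [set u; v] | u in int_vertices, v in int_vertices
                  & (u != v) && (u.1 :&: v.1 != set0)].

Definition restricted_chordal_completion
    (E' : {set {set ({set X} * {set {set X}})}}) : Prop :=
  chordal_completion int_vertices int_edges E' /\
  forall (A1 A2 : {set X}) (pi : {set {set X}}),
    pi \in Q -> A1 \in pi -> A2 \in pi -> A1 != A2 ->
    [set (A1, pi); (A2, pi)] \notin E'.

Definition minimal_restricted_chordal_completion
    (E' : {set {set ({set X} * {set {set X}})}}) : Prop :=
  restricted_chordal_completion E' /\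
  forall F : {set {set ({set X} * {set {set X}})}}, F \proper E' -> ~ restricted_chordal_completion F.

Definition cells : {set {set X}} := [set A | [exists pi in Q, A \in pi]].

Definition int_star_edges : {set {set {set X}}} :=
  [set [set A; B] | A in cells, B in cells & (A != B) && (A :&: B != set0)].

Definition forb_edges : {set {set {set X}}} :=
  [set [set A; B] | A in cells, B in cells
                  & (A != B) && [exists pi in Q, (A \in pi) && (B \in pi)]].

End PartialPartitions.

(* Main.v *)
Require Import Defs.
From mathcomp Require Import all_boot.
From mathcomp Require Import zify.
Set Implicit Arguments. Unset Strict Implicit. Unset Printing Implicit Defensive.

Section Gen.
Variable T : finType.
Variable E : {set {set T}}.
Hypothesis Hirr : forall a : T, [set a; a] \notin E.

Definition adj : rel T := fun a b => [set a; b] \in E.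

Lemma adjC : symmetric adj.
Proof. by move=> a b; rewrite /adj setUC. Qed.

Lemma adj_irr a : adj a a = false.
Proof. by apply/negbTE/Hirr. Qed.

Definition cadj (n i j : nat) : bool :=
  (j == i.+1) || (i == j.+1) || ((i == 0) && (j == n.-1)) || ((j == 0) && (i == n.-1)).

Lemma icyc_adj s x0 i j : induced_cycle E s -> i < size s -> j < size s ->
  adj (nth x0 s i) (nth x0 s j) = (i != j) && cadj (size s) i j.
Proof.
move=> [Hu [Hsz Hc]] Hi Hj.
case: (ltngtP i j) => Hij.
- apply/idP/idP.
  + by move=> /(Hc x0 i j Hij Hj) H; rewrite /cadj; case: H => [->|[-> ->]]; lia.
  + move=> H; apply/(Hc x0 i j Hij Hj); rewrite /cadj in H; lia.
- rewrite adjC; apply/idP/idP.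
  + by move=> /(Hc x0 j i Hij Hi) H; rewrite /cadj; case: H => [->|[-> ->]]; lia.
  + move=> H; apply/(Hc x0 j i Hij Hi); rewrite /cadj in H; lia.
- by rewrite Hij adj_irr ?eqxx.
Qed.

Lemma icyc_in s V x0 i : is_graph V E -> induced_cycle E s -> i < size s -> nth x0 s i \in V.
Proof.
move=> HG Hs Hi; have [_ [Hsz _]] := Hs.
set j := if i.+1 < size s then i.+1 else 0.
have Hj : j < size s by rewrite /j; case: ifP => //; lia.
have : adj (nth x0 s i) (nth x0 s j).
  by rewrite icyc_adj // /cadj /j; case: ifP; lia.
move=> /HG [_ /subsetP]; apply; by rewrite !inE eqxx.
Qed.

Lemma cyc_nbrs n i : 4 <= n -> i < n -> exists p q,
  [/\ p < n, q < n, cadj n i p, cadj n i q &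
    [/\ p != q, ~~ cadj n p q, p != i, q != i & forall j, j < n -> cadj n i j -> j = p \/ j = q]].
Proof.
move=> Hn Hi; rewrite /cadj.
have [->|H0] := eqVneq i 0.
  exists n.-1, 1; split; try lia; split; try lia; move=> j Hj; lia.
have [->|H1] := eqVneq i n.-1.
  exists n.-2, 0; split; try lia; split; try lia; move=> j Hj; lia.
exists i.-1, i.+1; split; try lia; split; try lia; move=> j Hj; lia.
Qed.


Fixpoint ip (x : T) (p : seq T) : bool :=
  if p is y :: p' then [&& adj x y, x \notin p, all (fun z => ~~ adj x z) p' & ip y p'] else true.

Lemma ip_exists n x p : size p <= n -> path adj x p -> uniq (x :: p) ->
  exists q, [/\ ip x q, last x q = last x p & {subset q <= p}].
Proof.
elim: n x p => [|n IH] x [|y p'].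
- by move=> _ _ _; exists [::].
- by [].
- by move=> _ _ _; exists [::].
move=> Hsz Hp0 Hu0.
move: Hp0 => /= /andP[Hxy Hp].
move: Hu0; rewrite cons_uniq => /andP[Hx Hu].
case: (boolP (has (adj x) p')) => Hh.
- have [z Hz Hxz] := hasP Hh.
  case/splitPr: Hz Hp Hx Hu Hsz Hh => p1 p2 Hp Hx Hu Hsz Hh.
  have [|||q [Hq Hl Hs]] := IH x (z :: p2).
  + by move: Hsz; rewrite /= size_cat /=; lia.
  + move: Hp; rewrite cat_path => /andP[_] /= /andP[_ ->]; by rewrite Hxz.
  + rewrite cons_uniq; apply/andP; split.
      by apply: contra Hx => H; rewrite inE mem_cat H !orbT.
    move: Hu => /andP[_] Hu; have : uniq (p1 ++ z :: p2) by []. by rewrite cat_uniq => /and3P[_ _ ->].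
  + exists q; split => //.
      by rewrite Hl /= last_cat.
    by move=> w /Hs H; rewrite inE mem_cat H !orbT.
- have [|q [Hq Hl Hs]] := IH y p' _ Hp Hu.
  + by move: Hsz => /=; lia.
  exists (y :: q); split.
  + rewrite /= Hxy Hq andbT /=; apply/andP; split.
      rewrite inE negb_or; move: Hx; rewrite inE negb_or => /andP[-> Hxp].
      by apply: contra Hxp => /Hs.
    apply/allP => w /Hs Hw; apply: contra Hh => Hxw; apply/hasP; by exists w.
  + by rewrite /= Hl.
  + by move=> w; rewrite !inE => /orP[->|/Hs ->]; rewrite ?orbT.
Qed.

Lemma ip_uniq x q : ip x q -> uniq (x :: q).
Proof.
elim: q x => [|y q IH] x // /and4P[_ Hx _ Hq].
by rewrite cons_uniq Hx (IH _ Hq).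
Qed.

Lemma ip_nth x q x0 i j : ip x q -> i < j -> j < size (x :: q) ->
  adj (nth x0 (x :: q) i) (nth x0 (x :: q) j) = (j == i.+1).
Proof.
elim: q x i j => [|y q IH] x i j; first by move=> _ /= ; lia.
move=> /and4P[Hxy Hx Ha Hq].
case: i => [|i]; case: j => [|j] //.
- case: j => [|j] //= _ Hj.
  have Hin : nth x0 q j \in q by apply: mem_nth; move: Hj => /=; lia.
  by rewrite (negbTE (allP Ha _ Hin)).
- move=> Hij Hj; rewrite /= -/(nth x0 (y :: q) i) -/(nth x0 (y :: q) j).
  by rewrite (IH y i j Hq) //.
Qed.

Lemma ip_cycle v x r y : ip x (rcons r y) -> adj v x -> adj v y ->
  all (fun z => ~~ adj v z) r -> v \notin r -> r != [::] ->
  induced_cycle E (v :: x :: rcons r y).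
Proof.
move=> Hip Hvx Hvy Ha Hvr Hr0.
have Hu := ip_uniq Hip.
have Hsr : 0 < size r by case: r Hr0 {Hip Ha Hvr Hu}.
split; [|split].
- rewrite cons_uniq Hu andbT !inE mem_rcons inE negb_or.
  apply/andP; split; first by apply: contraTneq Hvx => ->; rewrite adj_irr.
  rewrite negb_or Hvr andbT; by apply: contraTneq Hvy => ->; rewrite adj_irr.
- by rewrite /= size_rcons; lia.
move=> x0 i j Hij Hj.
change (adj (nth x0 (v :: x :: rcons r y) i) (nth x0 (v :: x :: rcons r y) j) <->
  (j = i.+1 \/ (i = 0 /\ j = (size (v :: x :: rcons r y)).-1))).
rewrite /= size_rcons in Hj *.
case: i Hij => [|i] Hij.
- case: j Hij Hj => [|j] // _ Hj.
  case: j Hj => [|k] Hj.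
    by rewrite /= Hvx; split => // _; left.
  rewrite /= nth_rcons.
  case: ifP => Hk.
    have Hin : nth x0 r k \in r by apply: mem_nth.
    rewrite (negbTE (allP Ha _ Hin)); split => // [[]]; lia.
  case: ifP => Hk2.
    rewrite Hvy; split => // _; right; split => //; move/eqP: Hk2; lia.
  lia.
- case: j Hij Hj => [|j] // Hij Hj.
  rewrite /= -/(nth x0 (x :: rcons r y) i) -/(nth x0 (x :: rcons r y) j).
  rewrite (ip_nth x0 Hip) //; last by rewrite /= size_rcons; lia.
  split; first by move/eqP => ->; left.
  by case => [[->]|[]] //.
Qed.

Definition chordal_on (W : {set T}) := forall s, {subset s <= W} -> ~ induced_cycle E s.
Definition simplicial (W : {set T}) w :=
  forall a b, a \in W -> b \in W -> adj w a -> adj w b -> a != b -> adj a b.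
Definition clique (K : {set T}) := forall a b, a \in K -> b \in K -> a != b -> adj a b.

Lemma chordal_on_sub (W W' : {set T}) : W' \subset W -> chordal_on W -> chordal_on W'.
Proof. by move=> /subsetP HW Hc s Hs; apply: Hc => z /Hs /HW. Qed.

Section Sep.
Variables (W : {set T}) (a b : T).
Definition Dset := [set z in W | (z != a) && ~~ adj a z].
Definition eD : rel T := fun u v => [&& adj u v, u \in Dset & v \in Dset].
Definition Cset := [set z | connect eD b z].
Definition Sset := [set z in W | (z \notin Cset) && [exists c in Cset, adj z c]].

Hypothesis HbD : b \in Dset.

Lemma eD_sym : symmetric eD.
Proof. by move=> u v; rewrite /eD adjC; case: (u \in Dset) (v \in Dset) => [] []; rewrite ?andbT ?andbF. Qed.

Lemma path_D x p : path eD x p -> all (mem Dset) p.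
Proof.
elim: p x => //= y p IH x /andP[/and3P[_ _ Hy] Hp]; by rewrite Hy (IH _ Hp).
Qed.

Lemma C_D z : z \in Cset -> z \in Dset.
Proof.
rewrite inE => /connectP[p Hp ->].
case/lastP: p Hp => [//|p w] Hp; rewrite last_rcons.
by have /allP := path_D Hp; apply; rewrite mem_rcons inE eqxx.
Qed.

Lemma bC : b \in Cset.
Proof. by rewrite inE connect0. Qed.

Lemma aD : a \notin Dset.
Proof. by rewrite inE eqxx andbF. Qed.

Lemma S_W z : z \in Sset -> z \in W.
Proof. by rewrite inE => /andP[]. Qed.

Lemma D_W z : z \in Dset -> z \in W.
Proof. by rewrite inE => /andP[]. Qed.

Lemma S_notC z : z \in Sset -> z \notin Cset.
Proof. by rewrite inE => /and3P[]. Qed.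

Lemma S_adj z : z \in Sset -> adj a z.
Proof.
rewrite inE => /and3P[HzW HzC /existsP[c /andP[Hc Hzc]]].
apply/negPn/negP => Haz.
have HcD := C_D Hc.
have HzD : z \in Dset.
  rewrite inE HzW Haz andbT /=; apply/eqP => Hza.
  by move: HcD; rewrite inE -Hza Hzc !andbF.
move/negP: HzC; apply; rewrite inE.
apply: connect_trans (_ : connect eD c z).
  by move: Hc; rewrite inE.
by apply: connect1; rewrite /eD adjC Hzc HcD HzD.
Qed.

Lemma C_nbr c z : c \in Cset -> z \in W -> adj c z -> z \in Cset \/ z \in Sset.
Proof.
move=> Hc HzW Hcz; case: (boolP (z \in Cset)) => HzC; [by left|right].
by rewrite inE HzW HzC /=; apply/existsP; exists c; rewrite Hc adjC.
Qed.

Lemma nS_nbr z c : z \in W -> z \notin Cset -> z \notin Sset -> c \in Cset -> ~~ adj z c.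
Proof.
move=> HzW HzC HzS Hc; apply: contra HzS => Hzc.
by rewrite inE HzW HzC /=; apply/existsP; exists c; rewrite Hc.
Qed.

Lemma S_clique : a \in W -> chordal_on W -> clique Sset.
Proof.
move=> HaW Hch x y HxS HyS Hxy.
apply/negPn/negP => Hnxy.
have := HxS; rewrite inE => /and3P[HxW HxC /existsP[cx /andP[Hcx Hxcx]]].
have := HyS; rewrite inE => /and3P[HyW HyC /existsP[cy /andP[Hcy Hycy]]].
have Hcc : connect eD cx cy.
  apply: connect_trans (_ : connect eD b cy); last by move: Hcy; rewrite inE.
  by rewrite (sym_connect_sym eD_sym); move: Hcx; rewrite inE.
case/connectP: Hcc => p Hp Hlp.
have HpC : {subset cx :: p <= Cset}.
  move=> w /(path_connect Hp) Hw; rewrite inE.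
  by apply: connect_trans Hw; move: Hcx; rewrite inE.
set p0 := cx :: rcons p y.
have Hpath : path adj x p0.
  rewrite /p0 /= Hxcx rcons_path -Hlp adjC Hycy andbT.
  by apply: sub_path Hp => u v /and3P[].
have Hl0 : last x p0 = y by rewrite /p0 /= last_rcons.
case: (shortenP Hpath) Hl0 => p' Hp' Hu' Hs' Hl'.
have [q [Hq Hlq Hsq]] := ip_exists (leqnn (size p')) Hp' Hu'.
case/lastP: q Hq Hlq Hsq => [|r z] Hq Hlq Hsq.
  by move: Hlq; rewrite /= Hl' => Hxy'; move: Hxy; rewrite Hxy' eqxx.
rewrite last_rcons Hl' in Hlq; subst z.
have Huq := ip_uniq Hq.
have Hyr : y \notin r.
  by move: Huq; rewrite cons_uniq rcons_uniq => /andP[_ /andP[]].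
have HrC : {subset r <= Cset}.
  move=> w Hw; have : w \in p0 by apply/Hs'/Hsq; rewrite mem_rcons inE Hw orbT.
  rewrite /p0 inE mem_rcons inE => /orP[/eqP ->|/orP[/eqP Hwy|Hwp]].
  - by apply: HpC; rewrite inE eqxx.
  - by move: Hyr; rewrite -Hwy Hw.
  - by apply: HpC; rewrite inE Hwp orbT.
have Hr0 : r != [::].
  apply/eqP => Hr; move: Hq; rewrite Hr /= => /andP[Hxy2 _].
  by move/negP: Hnxy.
apply: (Hch (a :: x :: rcons r y)).
  move=> w; rewrite !inE mem_rcons inE => /orP[/eqP->//|/orP[/eqP->//|/orP[/eqP->//|Hw]]].
  by apply/D_W/C_D/HrC.
apply: ip_cycle => //.
- exact: S_adj.
- exact: S_adj.
- apply/allP => w /HrC /C_D; rewrite inE => /andP[_ /andP[]] //.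
- by apply: contra aD => /HrC /C_D.
Qed.

End Sep.

Lemma dirac n (W : {set T}) : #|W| <= n -> chordal_on W -> forall K, clique K ->
  (exists2 u, u \in W & u \notin K) -> exists w, [/\ w \in W, w \notin K & simplicial W w].
Proof.
elim: n W => [|n IH] W HW Hch K HK [u HuW HuK].
  by move: HW; rewrite leqn0 => /eqP/cards0_eq HW0; move: HuW; rewrite HW0 inE.
case: (boolP [exists a in W, exists b in W, (a != b) && ~~ adj a b]); last first.
  move=> Hn; exists u; split => // a b Ha Hb _ _ Hab.
  apply/negPn/negP => Hnab; move/negP: Hn; apply.
  by apply/existsP; exists a; rewrite Ha /=; apply/existsP; exists b; rewrite Hb Hab.
move=> /existsP[a /andP[HaW /existsP[b /and3P[HbW Hab Hnab]]]].
have HbD : b \in Dset W a by rewrite inE HbW eq_sym Hab.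
have HSc := S_clique HbD HaW Hch.
case: (boolP [exists k in K, k \in Cset W a b]).
- move=> /existsP[k0 /andP[Hk0 Hk0C]].
  have HK' : forall k, k \in K -> k \in W -> k \in Cset W a b \/ k \in Sset W a b.
    move=> k Hk HkW; case: (boolP (k \in Cset W a b)) => HkC; first by left.
    case: (boolP (k \in Sset W a b)) => HkS; first by right.
    have := nS_nbr HkW HkC HkS Hk0C; rewrite HK //.
    by apply: contraNneq HkC => ->.
  have Hsub : W :\: Cset W a b \subset W by apply: subsetDl.
  have Hlt : #|W :\: Cset W a b| < #|W|.
    apply: proper_card; rewrite properEneq Hsub andbT.
    apply/eqP => Heq; have := bC W a b.
    have : b \in W :\: Cset W a b by rewrite Heq.
    by rewrite inE => /andP[/negP].
  have [||w [Hw1 Hw2 Hw3]] := IH (W :\: Cset W a b) _ (chordal_on_sub Hsub Hch) (Sset W a b) HSc.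
  + lia.
  + exists a; first by rewrite inE HaW andbT; apply: contra (aD W a) => /(C_D HbD).
    by apply/negP => /(S_adj HbD); rewrite adj_irr.
  move: Hw1; rewrite inE => /andP[HwC HwW].
  exists w; split => //.
    apply/negP => HwK; case: (HK' w HwK HwW) => H; first by move/negP: HwC.
    by move/negP: Hw2.
  move=> x y Hx Hy Hwx Hwy Hxy; apply: Hw3 => //.
  + rewrite inE Hx andbT; apply/negP => HxC.
    by move/negP: (nS_nbr HwW HwC Hw2 HxC); rewrite Hwx.
  + rewrite inE Hy andbT; apply/negP => HyC.
    by move/negP: (nS_nbr HwW HwC Hw2 HyC); rewrite Hwy.
- move=> HnK.
  have Hsub : Cset W a b :|: Sset W a b \subset W.
    by apply/subsetP => z; rewrite inE => /orP[/(C_D HbD)/D_W|/S_W].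
  have Hlt : #|Cset W a b :|: Sset W a b| < #|W|.
    apply: proper_card; rewrite properEneq Hsub andbT.
    apply/eqP => Heq.
    have : a \in Cset W a b :|: Sset W a b by rewrite Heq.
    rewrite inE => /orP[/(C_D HbD)|/(S_adj HbD)].
      by apply/negP; apply: aD.
    by rewrite adj_irr.
  have [||w [Hw1 Hw2 Hw3]] := IH (Cset W a b :|: Sset W a b) _ (chordal_on_sub Hsub Hch) (Sset W a b) HSc.
  + lia.
  + exists b; first by rewrite inE bC.
    by apply/negP => /S_notC; rewrite bC.
  have HwC : w \in Cset W a b by move: Hw1; rewrite inE (negbTE Hw2) orbF.
  have HwW : w \in W by apply/D_W/(C_D HbD).
  exists w; split => //.
    apply/negP => HwK; move/negP: HnK; apply; apply/existsP; exists w; by rewrite HwK HwC.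
  move=> x y Hx Hy Hwx Hwy Hxy; apply: Hw3 => //.
  + by rewrite inE; case: (C_nbr HwC Hx Hwx) => ->; rewrite ?orbT.
  + by rewrite inE; case: (C_nbr HwC Hy Hwy) => ->; rewrite ?orbT.
Qed.

End Gen.

Lemma set2_eq (T : finType) (a b c d : T) :
  [set a; b] = [set c; d] -> (a = c /\ b = d) \/ (a = d /\ b = c).
Proof.
move=> H.
have /set2P Ha : a \in [set c; d] by rewrite -H !inE eqxx.
have /set2P Hb : b \in [set c; d] by rewrite -H !inE eqxx orbT.
have /set2P Hc : c \in [set a; b] by rewrite H !inE eqxx.
have /set2P Hd : d \in [set a; b] by rewrite H !inE eqxx orbT.
case: Ha Hb Hc Hd => -> [] -> [] Hc [] Hd; subst; by [left|right].
Qed.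

Section Main.
Variable X : finType.
Variable Q : {set {set {set X}}}.
Hypothesis HQ : forall P, P \in Q -> partial_partition P.

Notation V := ({set X} * {set {set X}})%type.
Notation Vi := (int_vertices Q).

Definition L (F : {set {set {set X}}}) : {set {set V}} :=
  [set [set u; v] | u in Vi, v in Vi & (u != v) && ((u.1 == v.1) || ([set u.1; v.1] \in F))].

Definition Pj (E : {set {set V}}) : {set {set {set X}}} :=
  [set [set u.1; v.1] | u in Vi, v in Vi & (u.1 != v.1) && ([set u; v] \in E)].

Lemma inL F u v : [set u; v] \in L F <->
  [/\ u \in Vi, v \in Vi, u != v & (u.1 == v.1) || ([set u.1; v.1] \in F)].
Proof.
split.
- case/imset2P => u' v' Hu' /[!inE] /andP[Hv' /andP[Huv' Hc']] /set2_eq [[-> ->]|[-> ->]];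
    move: Hu'; rewrite inE => Hu'.
    by split.
  split => //; first by rewrite eq_sym.
  by rewrite eq_sym setUC.
- move=> [Hu Hv Huv Hc]; apply/imset2P; exists u v => //.
  by rewrite inE Hv Huv Hc.
Qed.

Lemma inVi u : (u \in Vi) = (u.2 \in Q) && (u.1 \in u.2).
Proof. by rewrite inE. Qed.

Lemma cellsP A : reflect (exists2 pi, pi \in Q & A \in pi) (A \in cells Q).
Proof. by rewrite inE; apply: (iffP exists_inP). Qed.

Lemma Vi_cells u : u \in Vi -> u.1 \in cells Q.
Proof. by rewrite inVi => /andP[H1 H2]; apply/cellsP; exists u.2. Qed.

Lemma cells_Vi A : A \in cells Q -> exists pi, (A, pi) \in Vi.
Proof. by case/cellsP => pi H1 H2; exists pi; rewrite inVi H1 H2. Qed.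

Lemma Vi_n0 u : u \in Vi -> u.1 :&: u.1 != set0.
Proof.
rewrite inVi setIid => /andP[/HQ /andP[/and3P[_ _ H0] _] Hu].
by apply: contraNneq H0 => <-.
Qed.

Lemma in_istar A B : A \in cells Q -> B \in cells Q -> A != B -> A :&: B != set0 ->
  [set A; B] \in int_star_edges Q.
Proof. by move=> HA HB Hne Hi; apply/imset2P; exists A B => //; rewrite inE HB Hne Hi. Qed.

Lemma in_forb A B pi : pi \in Q -> A \in pi -> B \in pi -> A != B -> [set A; B] \in forb_edges Q.
Proof.
move=> Hpi HA HB Hne; apply/imset2P; exists A B => //.
  by apply/cellsP; exists pi.
rewrite inE Hne /=; apply/andP; split; first by apply/cellsP; exists pi.
by apply/exists_inP; exists pi => //; rewrite HA HB.
Qed.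

Lemma in_int u v : u \in Vi -> v \in Vi -> u != v -> u.1 :&: v.1 != set0 -> [set u; v] \in int_edges Q.
Proof. by move=> Hu Hv Hne Hi; apply/imset2P; exists u v => //; rewrite inE Hv Hne Hi. Qed.

Lemma int_edgesE e : e \in int_edges Q -> exists u v, e = [set u; v] /\
  [/\ u \in Vi, v \in Vi, u != v & u.1 :&: v.1 != set0].
Proof.
case/imset2P => u v Hu; rewrite inE => /andP[Hv /andP[Hne Hi]] ->.
by exists u, v; split.
Qed.

Lemma istarE e : e \in int_star_edges Q -> exists A B, e = [set A; B] /\
  [/\ A \in cells Q, B \in cells Q, A != B & A :&: B != set0].
Proof.
case/imset2P => A B HA; rewrite inE => /andP[HB /andP[Hne Hi]] ->.
by exists A, B; split.
Qed.

Lemma forbE e : e \in forb_edges Q -> exists A B pi, e = [set A; B] /\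
  [/\ pi \in Q, A \in pi, B \in pi & A != B].
Proof.
case/imset2P => A B HA; rewrite inE => /andP[HB /andP[Hne /exists_inP[pi Hpi /andP[H1 H2]]]] ->.
by exists A, B, pi; split.
Qed.

Lemma L_irr F a : [set a; a] \notin L F.
Proof. by apply/negP => /inL [_ _ /eqP]. Qed.

Lemma L_graph F : is_graph Vi (L F).
Proof.
move=> e /imset2P [u v Hu]; rewrite inE => /andP[Hv /andP[Huv _]] ->; split.
  by rewrite cards2 Huv.
by apply/subsetP => w /set2P [->|->].
Qed.

Lemma cadjC n i j : cadj n i j = cadj n j i.
Proof. rewrite /cadj; lia. Qed.

Lemma lift_chordal F : chordal (cells Q) F -> chordal Vi (L F).
Proof.
move=> [HgF HnoF]; split; first exact: L_graph.
move=> [s Hs]; have [Hu [Hsz Hc]] := Hs.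
pose y0 : V := (set0, set0).
have HsV i : i < size s -> nth y0 s i \in Vi := icyc_in (@L_irr F) y0 (@L_graph F) Hs.
have Hadj := icyc_adj (@L_irr F) y0 Hs.
have Htw : forall i j, i < size s -> j < size s -> i != j -> (nth y0 s i).1 != (nth y0 s j).1.
  move=> i j Hi Hj Hij; apply/negP => /eqP Heq.
  have Hij' : adj (L F) (nth y0 s i) (nth y0 s j).
    apply/inL; split; try exact: HsV.
      by rewrite nth_uniq.
    by rewrite Heq eqxx.
  rewrite Hadj // Hij /= in Hij'.
  have [p [q [Hp Hq Hjp Hjq [Hpq Hnpq Hpj Hqj Hall]]]] := cyc_nbrs Hsz Hj.
  have key : forall t, t < size s -> cadj (size s) j t -> t != i -> ~~ cadj (size s) i t -> False.
    move=> t Ht Hjt Hti Hnit.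
    have Hjt' : adj (L F) (nth y0 s j) (nth y0 s t).
      rewrite Hadj // Hjt andbT; apply/eqP => Hjt2; move: Hjt; rewrite Hjt2 /cadj; lia.
    have Hit' : adj (L F) (nth y0 s i) (nth y0 s t) = false.
      by rewrite Hadj // (negbTE Hnit) andbF.
    move/inL: Hjt' => [_ Htv _ Hc'].
    move/negP: (negbT Hit'); apply; apply/inL; split => //; try exact: HsV.
      by rewrite nth_uniq // eq_sym.
    by rewrite Heq.
  have Hji : cadj (size s) j i by rewrite cadjC.
  case: (Hall i Hi Hji) => Hi'; subst i.
  + by apply: (key q) => //; rewrite eq_sym.
  + by apply: (key p) => //; rewrite ?eq_sym // cadjC.
apply: HnoF; exists (map fst s); split; [|split].
- apply/(uniqP set0) => i j; rewrite !inE size_map => Hi Hj.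
  rewrite !(nth_map y0) // => Heq; apply/eqP/negPn/negP => Hij.
  by move: (Htw i j Hi Hj Hij); rewrite Heq eqxx.
- by rewrite size_map.
- move=> x0 i j Hij; rewrite size_map => Hj.
  have Hi : i < size s := ltn_trans Hij Hj.
  rewrite !(nth_map y0) //.
  split => [HF|H].
  + apply/(Hc y0 i j Hij Hj); apply/inL; split; try exact: HsV.
      by rewrite nth_uniq // neq_ltn Hij.
    by rewrite HF orbT.
  + have := (Hc y0 i j Hij Hj).2 H; move/inL => [_ _ _ /orP[Heq|//]].
    by move: (Htw i j Hi Hj); rewrite neq_ltn Hij Heq => /(_ isT).
Qed.

Lemma lift_rcc F : chordal_sandwich (cells Q) (int_star_edges Q) (forb_edges Q) F ->
  restricted_chordal_completion Q (L F).
Proof.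
move=> [Hch [Hsub Hdis]]; split; first split.
- exact: lift_chordal.
- apply/subsetP => e /int_edgesE [u [v [-> [Hu Hv Huv Hn]]]].
  apply/inL; split => //.
  case: (eqVneq u.1 v.1) => //= Hne.
  by apply: (subsetP Hsub); apply: in_istar => //; apply: Vi_cells.
- move=> A1 A2 pi Hpi HA1 HA2 Hne; apply/negP => /inL [_ _ _] /= /orP [Heq | HF].
    by move: Hne; rewrite Heq.
  have : [set A1; A2] \in F :&: forb_edges Q by rewrite inE HF (in_forb Hpi).
  by rewrite Hdis inE.
Qed.

Definition Fof (E : {set {set V}}) : {set {set {set X}}} :=
  [set [set A; B] | A in cells Q, B in cells Q & (A != B) &&
     [forall u in Vi, forall v in Vi, ((u.1 == A) && (v.1 == B)) ==> ([set u; v] \in E)]].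

Lemma inFof E A B : [set A; B] \in Fof E <->
  [/\ A \in cells Q, B \in cells Q, A != B &
     forall u v, u \in Vi -> v \in Vi -> u.1 = A -> v.1 = B -> [set u; v] \in E].
Proof.
split.
- case/imset2P => A' B' HA'; rewrite inE => /andP[HB' /andP[Hne /forall_inP Hall]] /set2_eq [[-> ->]|[-> ->]].
  + split => // u v Hu Hv Hu1 Hv1.
    by move: (Hall u Hu) => /forall_inP /(_ v Hv) /implyP; apply; rewrite Hu1 Hv1 !eqxx.
  + split => //; first by rewrite eq_sym.
    move=> u v Hu Hv Hu1 Hv1; rewrite setUC.
    by move: (Hall v Hv) => /forall_inP /(_ u Hu) /implyP; apply; rewrite Hu1 Hv1 !eqxx.
- move=> [HA HB Hne Hall]; apply/imset2P; exists A B => //.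
  rewrite inE HB Hne /=; apply/forall_inP => u Hu; apply/forall_inP => v Hv.
  by apply/implyP => /andP[/eqP H1 /eqP H2]; apply: Hall.
Qed.

Lemma Fof_irr E A : [set A; A] \notin Fof E.
Proof. by apply/negP => /inFof [_ _ /eqP]. Qed.

Lemma proj_sand E : restricted_chordal_completion Q E ->
  exists F, chordal_sandwich (cells Q) (int_star_edges Q) (forb_edges Q) F /\ L F \subset E.
Proof.
move=> [[[HgE HnoE] HsubE] Hres].
have HirrE : forall a : V, [set a; a] \notin E.
  move=> a; apply/negP => /HgE [H _]; move: H; by rewrite setUid cards1.
have HgF : is_graph (cells Q) (Fof E).
  move=> e /imset2P [A B HA]; rewrite inE => /andP[HB /andP[Hne _]] ->; split.
    by rewrite cards2 Hne.
  by apply/subsetP => w /set2P [->|->].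
exists (Fof E); split; [split; [split|split]|].
- exact: HgF.
- move=> [s Hs]; have [Hu [Hsz Hc]] := Hs.
  pose A0 : {set X} := set0.
  have Hcell i : i < size s -> nth A0 s i \in cells Q := icyc_in (@Fof_irr E) A0 HgF Hs.
  have HadjF := icyc_adj (@Fof_irr E) A0 Hs.
  pose W := [set u in Vi | u.1 \in s].
  have Hch : chordal_on E W by move=> s' _ Hs'; apply: HnoE; exists s'.
  have Hs0 : 0 < size s by lia.
  have [pi0 Hpi0] := cells_Vi (Hcell 0 Hs0).
  have Hcl0 : clique E set0 by move=> a b; rewrite inE.
  have [|w [HwW _ Hsimp]] := dirac HirrE (leqnn #|W|) Hch Hcl0.
    exists (nth A0 s 0, pi0); last by rewrite inE.
    by rewrite inE Hpi0 /= mem_nth.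
  move: (HwW); rewrite inE => /andP[HwV Hws].
  set i := index w.1 s.
  have Hi : i < size s by rewrite index_mem.
  have Hwi : nth A0 s i = w.1 by rewrite nth_index.
  have [p [q [Hp Hq Hip Hiq [Hpq Hnpq Hpi Hqi _]]]] := cyc_nbrs Hsz Hi.
  have Hwadj : forall t u, t < size s -> cadj (size s) i t -> t != i -> u \in Vi ->
      u.1 = nth A0 s t -> adj E w u.
    move=> t u Ht Hit Hti Hu' Hut.
    have : adj (Fof E) (nth A0 s i) (nth A0 s t) by rewrite HadjF // Hit eq_sym Hti.
    by move/inFof => [_ _ _ Hall]; apply: Hall.
  have HpqF : [set nth A0 s p; nth A0 s q] \in Fof E.
    apply/inFof; split; [exact: Hcell|exact: Hcell| by rewrite nth_uniq |].
    move=> u v Hu' Hv' Hup Hvq.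
    apply: (Hsimp u v).
    + by rewrite inE Hu' Hup mem_nth.
    + by rewrite inE Hv' Hvq mem_nth.
    + exact: (Hwadj p).
    + exact: (Hwadj q).
    + apply/eqP => Huv; move: Hpq; rewrite -(nth_uniq A0 Hp Hq Hu) -Hup -Hvq Huv eqxx //.
  have := HadjF p q Hp Hq; rewrite /adj HpqF (negbTE Hnpq) andbF //.
- apply/subsetP => e /istarE [A [B [-> [HA HB Hne Hi]]]].
  apply/inFof; split => // u v Hu Hv Hu1 Hv1.
  apply: (subsetP HsubE); apply: in_int => //; first by apply: contraNneq Hne => Huv; rewrite -Hu1 -Hv1 Huv.
  by rewrite Hu1 Hv1.
- apply/setP => e; rewrite inE [RHS]inE; apply/negP => /andP [HF Hfb].
  have [A [B [pi [He [Hpi HA HB Hne]]]]] := forbE Hfb.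
  rewrite He in HF; move/inFof: HF => [_ _ _ Hall].
  have HAv : (A, pi) \in Vi by rewrite inVi Hpi HA.
  have HBv : (B, pi) \in Vi by rewrite inVi Hpi HB.
  by move/negP: (Hres A B pi Hpi HA HB Hne); apply; apply: Hall.
- apply/subsetP => e /imset2P [u v Hu]; rewrite inE => /andP[Hv /andP[Hne /orP[Heq|HF]]] ->.
  + apply: (subsetP HsubE); apply: in_int => //.
    by rewrite -(eqP Heq); apply: Vi_n0.
  + by move/inFof: HF => [_ _ _ Hall]; apply: Hall.
Qed.

Lemma PL F : is_graph (cells Q) F -> Pj (L F) = F.
Proof.
move=> HgF; apply/setP => e; apply/idP/idP.
- case/imset2P => u v Hu; rewrite inE => /andP[Hv /andP[Hne HL]] ->.
  by move/inL: HL => [_ _ _ /orP[H|//]]; move: Hne; rewrite H.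
- move=> He; have [Hc2 Hsub] := HgF e He.
  have /cards2P [A [B [Hab He']]] : #|e| == 2 by rewrite Hc2.
  subst e.
  have HA : A \in cells Q by apply: (subsetP Hsub); rewrite !inE eqxx.
  have HB : B \in cells Q by apply: (subsetP Hsub); rewrite !inE eqxx orbT.
  have [pA HpA] := cells_Vi HA; have [pB HpB] := cells_Vi HB.
  apply/imset2P; exists (A, pA) (B, pB) => //.
  rewrite inE HpB /= Hab /=; apply/inL; split => //.
    by apply: contraNneq Hab => -[-> _].
  by rewrite /= He orbT.
Qed.

Lemma L_mono (F F' : {set {set {set X}}}) : F \subset F' -> L F \subset L F'.
Proof.
move=> HFF'; apply/subsetP => e /imset2P [u v Hu]; rewrite inE => /andP[Hv /andP[Hne Hc]] ->.
apply/imset2P; exists u v => //; rewrite inE Hv Hne /=.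
by case/orP: Hc => [->//|H]; rewrite (subsetP HFF' _ H) orbT.
Qed.

Lemma Pj_mono (E E' : {set {set V}}) : E \subset E' -> Pj E \subset Pj E'.
Proof.
move=> HEE'; apply/subsetP => e /imset2P [u v Hu]; rewrite inE => /andP[Hv /andP[Hne Hc]] ->.
by apply/imset2P; exists u v => //; rewrite inE Hv Hne /= (subsetP HEE' _ Hc).
Qed.

Lemma main_thm :
  exists (f : {set {set V}} -> {set {set {set X}}})
         (g : {set {set {set X}}} -> {set {set V}}),
    (forall E, minimal_restricted_chordal_completion Q E ->
       minimal_chordal_sandwich (cells Q) (int_star_edges Q) (forb_edges Q) (f E)
       /\ g (f E) = E) /\
    (forall F, minimal_chordal_sandwich (cells Q) (int_star_edges Q) (forb_edges Q) F ->
       minimal_restricted_chordal_completion Q (g F) /\ f (g F) = F).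
Proof.
exists Pj, L; split.
- move=> E [HE Hmin].
  have [F [HF HLE]] := proj_sand HE.
  have HLrcc := lift_rcc HF.
  have HLeq : L F = E.
    apply/eqP; rewrite eqEproper HLE /=; apply/negP => Hpr; exact: Hmin _ Hpr HLrcc.
  have HgF : is_graph (cells Q) F by case: HF => [[]].
  have HPE : Pj E = F by rewrite -HLeq PL.
  rewrite HPE HLeq; split => //; split => // F' HF'pr HF'.
  have HgF' : is_graph (cells Q) F' by case: HF' => [[]].
  apply: (Hmin (L F')); last exact: lift_rcc.
  rewrite -HLeq properEneq L_mono ?andbT; last exact: proper_sub.
  apply/eqP => Heq; move: HF'pr; rewrite properEneq => /andP[/eqP H _]; apply: H.
  by rewrite -(PL HgF') -(PL HgF) Heq.
- move=> F [HF Hmin].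
  have HgF : is_graph (cells Q) F by case: HF => [[]].
  split; last exact: PL.
  split; first exact: lift_rcc.
  move=> E' Hpr HE'.
  have [F' [HF' HLE']] := proj_sand HE'.
  have HgF' : is_graph (cells Q) F' by case: HF' => [[]].
  apply: (Hmin F') => //.
  rewrite properEneq; apply/andP; split.
    apply/eqP => Heq; subst F'.
    move: Hpr; rewrite properEneq => /andP[/eqP H Hs]; apply: H.
    by apply/eqP; rewrite eqEsubset Hs HLE'.
  rewrite -(PL HgF') -(PL HgF).
  exact: subset_trans (Pj_mono HLE') (Pj_mono (proper_sub Hpr)).
Qed.

End Main.

Unset Implicit Arguments.
Theorem theorem5 (X : finType) (Q : {set {set {set X}}})
  (HQ : forall P, P \in Q -> partial_partition P) :
  exists (f : {set {set ({set X} * {set {set X}})}} -> {set {set {set X}}})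
         (g : {set {set {set X}}} -> {set {set ({set X} * {set {set X}})}}),
    (forall E, minimal_restricted_chordal_completion Q E ->
       minimal_chordal_sandwich (cells Q) (int_star_edges Q) (forb_edges Q) (f E)
       /\ g (f E) = E) /\
    (forall F, minimal_chordal_sandwich (cells Q) (int_star_edges Q) (forb_edges Q) F ->
       minimal_restricted_chordal_completion Q (g F) /\ f (g F) = F).
Proof. exact: main_thm. Qed.
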